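(* Let $N\ge 2$ and $m\ge N$ be integers, let $c_1,\dots,c_m$ be contents with request probabilities $\rho_1,\dots,\rho_m\ge 0$, $\sum_{\ell=1}^m\rho_\ell=1$. Consider users $u_1,\dots,u_N$, where $u_\kappa$ caches exactly $c_\kappa$, and each user $u_\mu$ independently requests a single content $R_\mu$ with $\Pr(R_\mu=c_\ell)=\rho_\ell$. Let $K$ be uniform on $\{1,\dots,N\}$, independent of the requests. Then the probability $\mathcal{P}_{\textup{TX}}$ that $u_K$ operates in a transmitting mode, i.e. in one of the modes SR-HDTX, HDTX or FDTR, is \[ \mathcal{P}_{\textup{TX}} = \frac{1}{N} \sum_{\kappa=1}^{N}\left(1-\left(1-\rho_\kappa\right)^{N-1}\right). \]
   Context: For a user $u_\kappa$, let $S_\kappa$ be the event that there exists $\mu\ne\kappa$, $\mu\in\{1,\dots,N\}$, with $R_\mu=c_\kappa$. Modes of $u_\kappa$: SR-HDTX: $R_\kappa=c_\kappa$ and $S_\kappa$; FDTR: $R_\kappa=c_\mu$ for some $\mu\in\{1,\dots,N\}\setminus\{\kappa\}$, and $S_\kappa$; HDTX: $R_\kappa\notin\{c_1,\dots,c_N\}$ and $S_\kappa$. *)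

(* Defs.v *)
From HB Require Import structures.
From mathcomp Require Import all_boot all_order all_algebra.
Set Implicit Arguments. Unset Strict Implicit. Unset Printing Implicit Defensive.
Import Order.TTheory GRing.Theory Num.Theory.
Local Open Scope ring_scope.

(* Contents c_1..c_m are indexed 0..m-1 (type 'I_m); users u_1..u_N are indexed
   0..N-1 (type 'I_N); user kappa caches content number kappa (valid as N <= m).
   A request profile is r : {ffun 'I_N -> 'I_m}, r mu = index of R_mu. *)

Definition cached (N : nat) (k : 'I_N) : nat := nat_of_ord k.

Definition S_ev (N m : nat) (r : {ffun 'I_N -> 'I_m}) (k : 'I_N) : bool :=
  [exists mu : 'I_N, (mu != k) && (nat_of_ord (r mu) == cached k)].

Definition mode_SRHDTX (N m : nat) (r : {ffun 'I_N -> 'I_m}) (k : 'I_N) : bool :=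
  (nat_of_ord (r k) == cached k) && S_ev r k.

Definition mode_FDTR (N m : nat) (r : {ffun 'I_N -> 'I_m}) (k : 'I_N) : bool :=
  [exists mu : 'I_N, (mu != k) && (nat_of_ord (r k) == cached mu)] && S_ev r k.

Definition mode_HDTX (N m : nat) (r : {ffun 'I_N -> 'I_m}) (k : 'I_N) : bool :=
  [forall mu : 'I_N, nat_of_ord (r k) != cached mu] && S_ev r k.

Definition transmitting (N m : nat) (r : {ffun 'I_N -> 'I_m}) (k : 'I_N) : bool :=
  [|| mode_SRHDTX r k, mode_HDTX r k | mode_FDTR r k].

Definition req_prob (R : realFieldType) (N m : nat) (rho : nat -> R)
  (r : {ffun 'I_N -> 'I_m}) : R := \prod_(mu : 'I_N) rho (nat_of_ord (r mu)).

Definition P_TX (R : realFieldType) (N m : nat) (rho : nat -> R) : R :=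
  \sum_(k : 'I_N) \sum_(r : {ffun 'I_N -> 'I_m})
     (N%:R)^-1 * req_prob rho r * (transmitting r k)%:R.

(* Main.v *)
Require Import Defs.
From mathcomp Require Import all_boot all_order all_algebra.
Import GRing.Theory Num.Theory.
Local Open Scope ring_scope.

Lemma trans_S (N m : nat) (r : {ffun 'I_N -> 'I_m}) (k : 'I_N) :
  transmitting r k = S_ev r k.
Proof.
rewrite /transmitting /mode_SRHDTX /mode_FDTR /mode_HDTX.
case: (S_ev r k); rewrite ?andbF ?andbT //=.
case: (eqVneq (nat_of_ord (r k)) (cached k)) => //= H.
case E: [forall mu, _] => //=.
move/negbT: E => /forallPn [mu]; rewrite negbK => /eqP E.
apply/existsP; exists mu; rewrite E eqxx andbT.
apply/eqP => Emu; move: H; rewrite E Emu eqxx.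
by [].
Qed.

Lemma probS (R : realFieldType) (N m : nat) (rho : nat -> R)
  (hNm : (N <= m)%N) (hrho1 : \sum_(l < m) rho l = 1) (k : 'I_N) :
  \sum_(r : {ffun 'I_N -> 'I_m}) req_prob rho r * (S_ev r k)%:R
  = 1 - (1 - rho k) ^+ (N.-1).
Proof.
pose F (mu : 'I_N) (l : 'I_m) : R :=
  rho l * ((mu == k) || (nat_of_ord l != nat_of_ord k))%:R.
have H1 : \sum_(r : {ffun 'I_N -> 'I_m}) req_prob rho r = 1.
  rewrite /req_prob -(bigA_distr_bigA (fun (mu : 'I_N) (l : 'I_m) => rho l)) /=.
  by rewrite big1 // => mu _.
have H2 : \sum_(r : {ffun 'I_N -> 'I_m}) \prod_mu F mu (r mu)
          = (1 - rho k) ^+ (N.-1).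
  rewrite -(bigA_distr_bigA F) /=.
  have km : (k < m)%N by apply: leq_trans (ltn_ord k) hNm.
  rewrite (bigD1 k) //= [X in X * _](_ : _ = 1); last first.
    by rewrite -hrho1; apply: eq_bigr => l _; rewrite /F eqxx mulr1.
  rewrite mul1r (eq_bigr (fun _ => 1 - rho k)); last first.
    move=> mu /negbTE Hmu; rewrite /F Hmu /=.
    rewrite (bigD1 (Ordinal km)) //= eqxx mulr0 add0r.
    transitivity (\sum_(l < m | l != Ordinal km) rho l).
      apply: eq_bigr => l Hl.
      suff -> : (nat_of_ord l != nat_of_ord k) by rewrite mulr1.
      by apply/negP => /eqP E; move: Hl; apply/negP; rewrite negbK; apply/eqP; apply: val_inj.
    apply/eqP; rewrite eq_sym subr_eq addrC -hrho1 (bigD1 (Ordinal km)) //=.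
  by rewrite prodr_const cardC1 card_ord.
have H3 : forall r : {ffun 'I_N -> 'I_m},
    req_prob rho r * (S_ev r k)%:R = req_prob rho r - \prod_mu F mu (r mu).
  move=> r; rewrite /F big_split /= /req_prob.
  case S: (S_ev r k).
    move/existsP: S => [mu /andP [Hmu /eqP E]].
    rewrite [X in _ - _ * X](bigD1 mu) //= (negbTE Hmu) E eqxx /=.
    by rewrite mul0r mulr0 subr0 mulr1.
  rewrite [X in _ - _ * X]big1 ?mulr1 ?mulr0 ?subrr // => mu _.
  case: (eqVneq mu k) => //= Hmu.
  case: (eqVneq (nat_of_ord (r mu)) (nat_of_ord k)) => //= E.
  move/negbT: S => /existsPn /(_ mu); rewrite Hmu E.
  by rewrite /cached eqxx.
by rewrite (eq_bigr _ (fun r _ => H3 r)) sumrB H1 H2.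
Qed.

Theorem corollary1 (R : realFieldType) (N m : nat) (rho : nat -> R)
  (hN : (2 <= N)%N) (hNm : (N <= m)%N)
  (hrho0 : forall l : nat, (l < m)%N -> 0 <= rho l)
  (hrho1 : \sum_(l < m) rho l = 1) :
  P_TX N m rho = (N%:R)^-1 * \sum_(k < N) (1 - (1 - rho k) ^+ (N.-1)).
Proof.
rewrite /P_TX big_distrr /=; apply: eq_bigr => k _.
rewrite -(@probS R N m rho hNm hrho1 k) big_distrr /=; apply: eq_bigr => r _.
by rewrite trans_S mulrA.
Qed.
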